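(* Let $\rho \in (-\tfrac{1}{3},0)\cup (0,1)$ and let $\{a_t\}_{t\ge0}$, $\{b_t\}_{t\ge0}$ be sequences satisfying $a_0=b_0=0$, $a_1=b_1$, and $a_{t+1} = \rho(2a_t -a_{t-1}) + b_t - b_{t-1}$ for all $t\geq 1$. Set $\beta_s=b_s-b_{s-1}$, $u=\rho+\sqrt{\rho^2-\rho}$ and $v=\rho-\sqrt{\rho^2-\rho}$ (complex numbers when $0<\rho<1$). Then for all $t\ge0$, $$a_{t+1} = a_1\,\frac{u^{t+1}-v^{t+1}}{u-v} + \sum_{s=1}^t\beta_s\,\frac{u^{t-s+1}-v^{t-s+1}}{u-v}.$$ Moreover, if $0<\rho<1$, then with $\theta=\arccos(\sqrt{\rho})$, for all $t\ge0$, $$a_{t+1}\sin{\theta} = a_1\rho^{t/2}\sin{[(t+1)\theta]} + \sum_{s=1}^t\beta_s\rho^{(t-s)/2}\sin{[(t+1-s)\theta]}.$$ *)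

(* Defs.v *)
From HB Require Import structures.
From mathcomp Require Import all_boot all_order all_algebra.
From mathcomp Require Import complex.
From mathcomp Require Import all_classical all_reals all_analysis.

(* Main.v *)
Require Import Defs.
From HB Require Import structures.
From mathcomp Require Import all_boot all_order all_algebra.
From mathcomp Require Import complex.
From mathcomp Require Import all_classical all_reals all_analysis.
From mathcomp Require Import ring.
Import Order.TTheory GRing.Theory Num.Theory.
Local Open Scope ring_scope.
Local Open Scope complex_scope.

Lemma gen_rec (K : comNzRingType) (c : K) (A B w : nat -> K)
  (hA0 : A 0%N = 0) (hB0 : B 0%N = 0)
  (hrec : forall t : nat, (1 <= t)%N -> A t.+1 = c * (2 * A t - A t.-1) + B t - B t.-1)
  (hw0 : w 0%N = 0) (hw : forall n, w n.+2 = 2 * c * w n.+1 - c * w n) :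
  forall t, A t.+1 * w 1%N = A 1%N * w t.+1 + \sum_(1 <= s < t.+1) (B s - B s.-1) * w (t.+1 - s)%N.
Proof.
have key : forall t, A t.+1 * w 1%N = A 1%N * w t.+1 + \sum_(1 <= s < t.+1) (B s - B s.-1) * w (t.+1 - s)%N
   /\ A t.+2 * w 1%N = A 1%N * w t.+2 + \sum_(1 <= s < t.+2) (B s - B s.-1) * w (t.+2 - s)%N.
  elim=> [|t [IH1 IH2]].
    rewrite big_geq // addr0; split => //.
    rewrite big_nat1 hrec // /= hA0 hB0 hw hw0 subn1 /=. ring.
  split => //.
  rewrite hrec // -/(t.+2.-1) /= hw.
  rewrite [X in _ = _ + X]big_nat_recr //= subSnn.
  have -> : \sum_(1 <= i < t.+2) (B i - B i.-1) * w (t.+3 - i)%N =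
     2 * c * \sum_(1 <= i < t.+2) (B i - B i.-1) * w (t.+2 - i)%N
     - c * \sum_(1 <= i < t.+1) (B i - B i.-1) * w (t.+1 - i)%N.
    rewrite [X in _ = _ - _ * X](_ : _ = \sum_(1 <= i < t.+2) (B i - B i.-1) * w (t.+1 - i)%N); last first.
      by rewrite [RHS]big_nat_recr //= subnn hw0 mulr0 addr0.
    rewrite !mulr_sumr -sumrB; apply: eq_big_nat => i /andP[i1 it].
    have h1 : (t.+3 - i = (t.+1 - i).+2)%N by rewrite -!subSn // ltnW.
    have h2 : (t.+2 - i = (t.+1 - i).+1)%N by rewrite -!subSn // ltnW.
    rewrite h1 h2 hw; ring.
  have E2 : \sum_(1 <= s < t.+2) (B s - B s.-1) * w (t.+2 - s)%N = A t.+2 * w 1%N - A 1%N * w t.+2 by rewrite IH2; ring.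
  have E1 : \sum_(1 <= s < t.+1) (B s - B s.-1) * w (t.+1 - s)%N = A t.+1 * w 1%N - A 1%N * w t.+1 by rewrite IH1; ring.
  rewrite E1 E2; ring.
by move=> t; case: (key t).
Qed.

Theorem lemma3 (R : realType) (rho : R) (a b : nat -> R)
  (hrho : (- (1 / 3) < rho < 0) \/ (0 < rho < 1))
  (ha0 : a 0%N = 0) (hb0 : b 0%N = 0) (hab1 : a 1%N = b 1%N)
  (hrec : forall t : nat, (1 <= t)%N ->
     a t.+1 = rho * (2 * a t - a t.-1) + b t - b t.-1) :
  let beta := fun s : nat => b s - b s.-1 in
  let u : R[i] := rho%:C + sqrtC ((rho ^+ 2 - rho)%:C) in
  let v : R[i] := rho%:C - sqrtC ((rho ^+ 2 - rho)%:C) in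
  (forall t : nat,
     (a t.+1)%:C =
       (a 1%N)%:C * ((u ^+ t.+1 - v ^+ t.+1) / (u - v))
       + \sum_(1 <= s < t.+1)
           (beta s)%:C * ((u ^+ (t - s).+1 - v ^+ (t - s).+1) / (u - v)))
  /\
  (0 < rho < 1 ->
   let theta := acos (Num.sqrt rho) in
   forall t : nat,
     a t.+1 * sin theta =
       a 1%N * rho `^ (t%:R / 2) * sin (t.+1%:R * theta)
       + \sum_(1 <= s < t.+1)
           beta s * rho `^ ((t%:R - s%:R) / 2) * sin ((t.+1 - s)%:R * theta)).
Proof.
move=> beta u v; split.
  set c : R[i] := rho%:C.
  set s := sqrtC ((rho ^+ 2 - rho)%:C).
  have hr0 : rho != 0 by case: hrho => /andP[h1 h2]; [exact: ltr0_neq0|exact: lt0r_neq0].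
  have hr1 : rho != 1 by case: hrho => /andP[h1 h2]; [rewrite neq_lt (lt_trans h2 ltr01) | rewrite neq_lt h2].
  have hs : s ^+ 2 = c ^+ 2 - c by rewrite sqrtCK rmorphB rmorphXn.
  have hrr : rho ^+ 2 - rho != 0.
    by rewrite -{2}(mulr1 rho) -mulrBr mulf_neq0 // subr_eq0.
  have s0 : s != 0.
    apply/eqP => s0.
    have : (rho ^+ 2 - rho)%:C = 0 :> R[i] by rewrite -[LHS]sqrtCK -/s s0 expr0n.
    move/(congr1 (@complex.Re R)) => /= /eqP; exact/negP.
  have uv : u - v != 0.
    have -> : u - v = 2 * s.
      by rewrite /u /v opprD opprK addrACA subrr add0r mulr2n mulrDl mul1r.
    by rewrite mulf_neq0 // pnatr_eq0.
  have hu : u ^+ 2 = 2 * c * u - c by rewrite /u sqrrD hs; ring.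
  have hv : v ^+ 2 = 2 * c * v - c by rewrite /v sqrrB hs; ring.
  have gu : forall x : R[i], x ^+ 2 = 2 * c * x - c -> forall n, x ^+ n.+2 = 2 * c * x ^+ n.+1 - c * x ^+ n.
    move=> x hx n; apply/eqP; rewrite -subr_eq0.
    have -> : x ^+ n.+2 - (2 * c * x ^+ n.+1 - c * x ^+ n) = x ^+ n * (x ^+ 2 - (2 * c * x - c)) by rewrite !exprS; ring.
    by rewrite hx subrr mulr0.
  pose w n := (u ^+ n - v ^+ n) / (u - v).
  have := @gen_rec _ c (fun t => (a t)%:C) (fun t => (b t)%:C) w.
  move=> /(_ _ _ _ _ _) H t.
  have H' := H (ltac:(by rewrite ha0)) (ltac:(by rewrite hb0)) _ _ _ t.
  rewrite /w expr1 divff // mulr1 in H'.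
  rewrite H'; last first.
  - by move=> n; rewrite /w (gu u hu) (gu v hv); ring.
  - by rewrite /w !expr0 subrr mul0r.
  - by move=> t0 ht0; rewrite hrec // !(rmorphB, rmorphD, rmorphM) /=.
  congr (_ + _); apply: eq_big_nat => i /andP[i1 it].
  by rewrite /beta rmorphB subSn.
move=> /andP[r0 r1] theta.
set q := Num.sqrt rho.
have hq : rho = q ^+ 2 by rewrite sqr_sqrtr // ltW.
have q0 : 0 <= q by exact: sqrtr_ge0.
have cq : cos theta = q.
  rewrite /theta acosK // in_itv /= (le_trans _ q0) ?lerN10 //=.
  by rewrite -sqrtr1 ler_sqrt // ltW.
have pq : forall k : nat, rho `^ (k%:R / 2) = q ^+ k.
  move=> k; rewrite mulrC powRrM powR12_sqrt ?ltW // powR_mulrn //.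
pose w n := q ^+ n.-1 * sin (n%:R * theta).
have := @gen_rec _ rho a b w ha0 hb0 hrec.
have w0 : w 0%N = 0 by rewrite /w mul0r sin0 mulr0.
have hw : forall n, w n.+2 = 2 * rho * w n.+1 - rho * w n.
  case=> [|m].
    rewrite /w /= mul0r sin0 !mulr0 subr0 expr1 expr0 !mul1r.
    rewrite (_ : 2 * theta = theta + theta); last by rewrite mulr2n mulrDl mul1r.
    rewrite sinD cq hq; ring.
  rewrite /w /=.
  set x := (m.+2%:R * theta).
  have e1 : m.+3%:R * theta = x + theta by rewrite /x -addn1 natrD mulrDl mul1r.
  have e2 : m.+1%:R * theta = x - theta by rewrite /x -[m.+2]addn1 natrD mulrDl mul1r addrK.
  rewrite e1 e2 sinD sinB cq hq !exprS; ring.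
move=> /(_ w0 hw) H t.
rewrite /w /= expr0 mul1r mul1r in H.
rewrite H pq -mulrA; congr (_ + _); apply: eq_big_nat => i /andP[i1 it].
rewrite /w -mulrA -natrB ?pq; last by rewrite -ltnS.
by rewrite subSn // -ltnS.
Qed.
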